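(* There is an absolute constant $C$ such that for every $\epsilon\in(0,1]$ there is an $\epsilon$-edge differentially private algorithm which, given a graph $G$ on $n\ge3$ vertices, outputs a real number $\hat\rho$ with $|\hat\rho-\rho(G)|\le C\sqrt{\log(n)/\epsilon}$ with probability at least $1-1/n$.
   Context: For nonempty $S\subseteq V$, $\rho(S)=|E(S)|/|S|$ with $E(S)$ the edges inside $S$, and $\rho(G)=\max_{\emptyset\ne S\subseteq V}\rho(S)$. Edge-neighboring graphs have the same vertex set and edge sets differing in exactly one edge; an algorithm is $\epsilon$-edge DP if $\Pr[\mathcal A(G)\in O]\le e^\epsilon\Pr[\mathcal A(G')\in O]$ for all edge-neighboring $G,G'$ and all output sets $O$. $\log$ is the natural logarithm. *)

(* Defs.v *)
From HB Require Import structures.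
From mathcomp Require Import all_boot all_order all_algebra.
From mathcomp Require Import all_classical all_reals all_analysis.
Set Implicit Arguments. Unset Strict Implicit. Unset Printing Implicit Defensive.
Import Order.TTheory GRing.Theory Num.Theory.

Definition is_simple_graph (n : nat) (E : {set {set 'I_n}}) : bool :=
  [forall e in E, #|e| == 2].

Definition sgraph (n : nat) := {E : {set {set 'I_n}} | is_simple_graph E}.

Definition edges (n : nat) (G : sgraph n) : {set {set 'I_n}} := sval G.

Definition edge_neighbors (n : nat) (G G' : sgraph n) : Prop :=
  #|(edges G :\: edges G') :|: (edges G' :\: edges G)| = 1%N.

Local Open Scope ring_scope.

Definition inner_edges (n : nat) (G : sgraph n) (S : {set 'I_n}) : {set {set 'I_n}} :=
  [set e in edges G | e \subset S].

Definition density (R : realType) (n : nat) (G : sgraph n) (S : {set 'I_n}) : R :=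
  (#|inner_edges G S|%:R) / (#|S|%:R).

(* rho(G) = max over nonempty S of rho(S)  (all values are >= 0, so
   starting the max at 0 is harmless) *)
Definition max_density (R : realType) (n : nat) (G : sgraph n) : R :=
  \big[Num.max/0]_(S : {set 'I_n} | (0 < #|S|)%N) density R G S.

(* Main.v *)
Require Import Defs.
From HB Require Import structures.
From mathcomp Require Import all_boot all_order all_algebra.
From mathcomp Require Import all_classical all_reals all_analysis.
From mathcomp Require Import ring lra zify.
Import Order.TTheory GRing.Theory Num.Theory.

Local Open Scope ring_scope.

Section Graph.
Variables (R : realType) (n : nat).
Implicit Types (G : sgraph n) (S : {set 'I_n}).

Lemma density_ge0 G S : 0 <= density R G S.
Proof. by rewrite /density divr_ge0. Qed.

Lemma md_ge0 G : 0 <= max_density R G.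
Proof.
rewrite /max_density; apply: (big_ind (fun x : R => 0 <= x)) => //.
- by move=> x y hx hy; rewrite le_max hx.
- by move=> S _; exact: density_ge0.
Qed.

Lemma md_ub G S : (0 < #|S|)%N -> density R G S <= max_density R G.
Proof. by move=> hS; rewrite /max_density; apply: le_bigmax_cond. Qed.

Lemma md_cases G : max_density R G = 0 \/
  exists S, (0 < #|S|)%N /\ max_density R G = density R G S.
Proof.
rewrite /max_density; apply: (big_ind (fun x : R => x = 0 \/
  exists S, (0 < #|S|)%N /\ x = density R G S)).
- by left.
- move=> x y hx hy; case: (leP x y) => _; [exact: hy | exact: hx].
- by move=> S hS; right; exists S.
Qed.

Lemma inner_card G S : (#|inner_edges G S| * 2 <= #|S| * #|S|.-1)%N.
Proof.
have sub : inner_edges G S \subset [set A : {set 'I_n} | A \subset S & #|A| == 2%N].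
  apply/fintype.subsetP => e; rewrite !inE => /andP[eG eS]; rewrite eS /=.
  case: G eG => E /= hE eE; move/forall_inP: hE; exact.
have := subset_leq_card sub; rewrite cards_draws => h.
have := mul_bin_diag #|S| 1; rewrite bin1 => e.
rewrite mulnC; apply: leq_trans (leq_mul (leqnn 2) h) _.
by rewrite e.
Qed.

Lemma inner_le G G' S : edge_neighbors G G' ->
  (#|inner_edges G S| <= #|inner_edges G' S| + 1)%N.
Proof.
rewrite /edge_neighbors => hD.
set D := (_ :|: _) in hD.
have sub : inner_edges G S \subset inner_edges G' S :|: D.
  apply/fintype.subsetP => e; rewrite !inE => /andP[eG eS].
  by case: (boolP (e \in edges G')) => eG'; rewrite ?eG ?eG' ?eS.
apply: leq_trans (subset_leq_card sub) _.
by rewrite -hD cardsU leq_subr.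
Qed.

Lemma en_sym G G' : edge_neighbors G G' -> edge_neighbors G' G.
Proof. by rewrite /edge_neighbors finset.setUC. Qed.

Lemma sq_sens (a b s : nat) (r r' : R) : (0 < s)%N -> (a <= b + 1)%N ->
  (a * 2 <= s * s.-1)%N -> r = a%:R / s%:R -> b%:R / s%:R <= r' -> 0 <= r' ->
  r ^+ 2 - r' ^+ 2 <= 1.
Proof.
move=> s0 ab as2 hr hr' r'0.
have sp : 0 < s%:R :> R by rewrite ltr0n.
have hx : r * s%:R = a%:R by rewrite hr mulfVK // gt_eqF.
have hy : (b%:R : R) <= r' * s%:R by rewrite -ler_pdivrMr.
have ab' : (a%:R : R) <= b%:R + 1 by rewrite natr1 ler_nat -addn1.
have as2' : (a%:R * 2 : R) <= s%:R * (s%:R - 1).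
  have -> : (s%:R - 1 : R) = s.-1%:R by case: (s) s0 => // k _; rewrite -natr1 addrK.
  by have := as2; rewrite -(ler_nat R) !natrM.
have s1 : 1 <= (s%:R : R) by rewrite ler1n.
have r0 : 0 <= r by rewrite hr divr_ge0.
case: (leP r r') => hrr.
  have : r ^+ 2 <= r' ^+ 2 by rewrite ler_sqr ?nnegrE.
  lra.
have h1 : (r - r') * s%:R <= 1 by nra.
have h2 : (r + r') * s%:R <= a%:R * 2 by nra.
have h3 : (r ^+ 2 - r' ^+ 2) * (s%:R ^+ 2) <= s%:R ^+ 2.
  have -> : (r ^+ 2 - r' ^+ 2) * (s%:R ^+ 2) = ((r - r') * s%:R) * ((r + r') * s%:R)
    by ring.
  have hp : 0 <= (r + r') * s%:R by nra.
  have hq : 0 <= (r - r') * s%:R by nra.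
  nra.
by rewrite -(ler_pM2r (_ : 0 < s%:R ^+ 2)) ?mul1r // exprn_gt0.
Qed.

Lemma md_sens1 G G' : edge_neighbors G G' ->
  max_density R G ^+ 2 - max_density R G' ^+ 2 <= 1.
Proof.
move=> hn; case: (md_cases G) => [->|[S [hS ->]]].
  have := md_ge0 G'; rewrite expr0n /= => h; nra.
apply: (@sq_sens _ #|inner_edges G' S| _ _ _ hS (inner_le G G' S hn) (inner_card G S)).
- by [].
- exact: (md_ub G' S hS).
- exact: md_ge0.
Qed.

Lemma md_sens G G' : edge_neighbors G G' ->
  `|max_density R G ^+ 2 - max_density R G' ^+ 2| <= 1.
Proof.
move=> hn; rewrite ler_norml md_sens1 // andbT.
have := md_sens1 _ _ (en_sym _ _ hn); lra.
Qed.

Lemma md_le_n G : max_density R G <= n%:R.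
Proof.
rewrite /max_density; apply/bigmax_leP; split => // S hS.
rewrite /density ler_pdivrMr ?ltr0n // -natrM ler_nat.
have := inner_card G S; have : (#|S| <= n)%N.
  by rewrite -[X in (_ <= X)%N]card_ord max_card.
nia.
Qed.

End Graph.
Section Real.
Variable R : realType.

Lemma dp_real (K : nat) (f f' c : nat -> R) (e : R) : 0 < e ->
  (forall k, 0 <= c k) -> (forall k, `|f k - f' k| <= 1) ->
  (\sum_(k < K.+1) expR (- (e / 2) * f k) * c k) / (\sum_(k < K.+1) expR (- (e / 2) * f k))
  <= expR e * ((\sum_(k < K.+1) expR (- (e / 2) * f' k) * c k) /
              (\sum_(k < K.+1) expR (- (e / 2) * f' k))).
Proof.
move=> e0 c0 hf.
set E := expR (e / 2).
have hE : expR e = E * E by rewrite /E -expRD; congr expR; field.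
have E0 : 0 < E by exact: expR_gt0.
have key : forall (g g' : nat -> R), (forall k, `|g k - g' k| <= 1) ->
    forall k, expR (- (e / 2) * g k) <= E * expR (- (e / 2) * g' k).
  move=> g g' hg k; rewrite /E -expRD ler_expR.
  have := hg k; rewrite ler_norml => /andP[h1 h2]; nra.
have hf' : forall k, `|f' k - f k| <= 1 by move=> k; rewrite distrC.
set a := \sum_(k < K.+1) _ * c k.
set Z := \sum_(k < K.+1) expR (- (e / 2) * f k).
set a' := \sum_(k < K.+1) _ * c k.
set Z' := \sum_(k < K.+1) expR (- (e / 2) * f' k).
have Zp : forall g : nat -> R, 0 < \sum_(k < K.+1) expR (- (e / 2) * g k).
  move=> g; rewrite big_ord_recl /=; apply: ltr_pwDl; first exact: expR_gt0.
  by apply: sumr_ge0 => i _; exact: ltW (expR_gt0 _).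
have Z0 : 0 < Z := Zp f.
have Z'0 : 0 < Z' := Zp f'.
have a'0 : 0 <= a' by apply: sumr_ge0 => i _; rewrite mulr_ge0 // ltW // expR_gt0.
have ha : a <= E * a'.
  rewrite /a /a' mulr_sumr; apply: ler_sum => k _.
  by rewrite mulrA ler_wpM2r // key.
have hZ : Z' <= E * Z.
  rewrite /Z /Z' mulr_sumr; apply: ler_sum => k _; exact: key.
rewrite hE ler_pdivrMr //.
have -> : E * E * (a' / Z') * Z = ((E * a') * (E * Z)) / Z'.
  by field; rewrite gt_eqF.
rewrite ler_pdivlMr //.
apply: ler_pM => //; [|exact: ltW].
apply: sumr_ge0 => i _; rewrite mulr_ge0 // ltW // expR_gt0.
Qed.

Lemma sq_gap (u r T : R) : 0 <= u -> 0 <= r -> 0 <= T -> T < `|u - r| ->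
  T ^+ 2 <= `|u ^+ 2 - r ^+ 2|.
Proof.
move=> u0 r0 T0; rewrite ltr_normr ler_normr => /orP[hT|hT]; apply/orP.
  by left; nra.
by right; nra.
Qed.

End Real.
Section Mech.
Local Open Scope classical_set_scope.
Variables (R : realType) (eps : R) (n : nat) (G : sgraph n).

Definition gval : R := max_density R G ^+ 2.
Definition wt (k : nat) : R := expR (- (eps / 2) * `|k%:R - gval|).
Definition Kc := (n * n).+1.
Definition xk (k : nat) : R := Num.sqrt k%:R.
Definition mu_m (k : nat) : {measure set R -> \bar R} :=
  mscale (NngNum (ltW (expR_gt0 (- (eps / 2) * `|k%:R - gval|)))) (@dirac _ R (xk k) R).
Definition mumech : {measure set R -> \bar R} := msum mu_m Kc.
Definition mech : probability R R := mnormalize mumech (@dirac _ R 0 R).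

Definition Ssum (O : set R) : R := \sum_(k < Kc) wt k * \1_O (xk k).
Definition Zsum : R := \sum_(k < Kc) wt k.

Lemma Zsum_gt0 : 0 < Zsum.
Proof.
rewrite /Zsum big_ord_recl /=; apply: ltr_pwDl; first exact: expR_gt0.
by apply: sumr_ge0 => i _; exact: ltW (expR_gt0 _).
Qed.

Lemma mumechE O : mumech O = (Ssum O)%:E.
Proof.
rewrite /mumech /= /msum /Ssum -sumEFin; apply: eq_bigr => k _.
by rewrite /mu_m /= /mscale /= /dirac EFinM.
Qed.

Lemma SsumT : Ssum setT = Zsum.
Proof. by apply: eq_bigr => k _; rewrite indicE in_setT mulr1. Qed.

Lemma mechE O : mech O = (Ssum O / Zsum)%:E.
Proof.
rewrite /mech /= /mnormalize mumechE SsumT.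
have Z0 := Zsum_gt0.
rewrite ifF; last by rewrite eqe (gt_eqF Z0).
by rewrite mumechE /= EFinM.
Qed.


Lemma mech_acc : 0 < eps -> eps <= 1 -> (3 <= n)%N ->
  1 - (n%:R)^-1 <= Ssum [set x : R | `|x - max_density R G| <= 4 * Num.sqrt (ln (n%:R) / eps)] / Zsum.
Proof.
move=> e0 e1 n3.
set rho := max_density R G.
set T := 4 * _.
set good := [set x : R | _].
have N3 : 3 <= n%:R :> R by rewrite (ler_nat R 3 n).
have N0 : 0 < n%:R :> R by lra.
have lnn0 : 0 <= ln (n%:R : R) by rewrite ln_ge0 //; lra.
have y0 : 0 <= ln (n%:R : R) / eps by rewrite divr_ge0 // ltW.
have T0 : 0 <= T by rewrite /T mulr_ge0 // sqrtr_ge0.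
have hT2 : T ^+ 2 = 16 * (ln (n%:R : R) / eps) by rewrite /T exprMn sqr_sqrtr //; ring.
have hB : expR (- (eps / 2) * T ^+ 2) = (n%:R ^+ 8)^-1.
  rewrite hT2 (_ : - (eps / 2) * (16 * (ln n%:R / eps)) = - (8%:R * ln (n%:R : R))); last first.
    by field; rewrite gt_eqF.
  by rewrite expRN expRM_natl lnK // posrE.
have rho0 : 0 <= rho := @md_ge0 R n G.
have rhon : rho <= n%:R := @md_le_n R n G.
have hbad : forall k, wt k * (1 - \1_good (xk k)) <= (n%:R ^+ 8)^-1.
  move=> k; rewrite indicE; case: (boolP (xk k \in good)) => h.
    by rewrite subrr mulr0 invr_ge0 exprn_ge0 // ltW.
  rewrite subr0 mulr1 -hB /wt ler_expR.
  have h' : T < `|xk k - rho|.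
    rewrite ltNge; apply/negP => H; apply: (negP h); exact: mem_set.
  have := @sq_gap R _ _ _ (sqrtr_ge0 (k%:R : R)) rho0 T0 h'.
  rewrite sqr_sqrtr ?ler0n // => hg.
  rewrite /gval -/rho !mulNr lerN2 ler_wpM2l // divr_ge0 // ltW //.
have hbadsum : \sum_(k < Kc) wt k * (1 - \1_good (xk k)) <= (n * n).+1%:R * (n%:R ^+ 8)^-1.
  apply: le_trans; first by apply: ler_sum => k _; exact: hbad.
  by rewrite sumr_const card_ord mulr_natl /Kc.
have hZ : 1 / 2 <= Zsum.
  have := truncn_itv (exprn_ge0 2 rho0); set k0 := Num.Def.trunc _ => /andP[lo hi].
  have k0K : (k0 < Kc)%N.
    rewrite /Kc ltnS -(ler_nat R) natrM; apply: le_trans lo _.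
    by rewrite expr2; apply: ler_pM.
  have hw : wt k0 <= Zsum.
    rewrite /Zsum (bigD1 (Ordinal k0K)) //= lerDl.
    by apply: sumr_ge0 => i _; exact: ltW (expR_gt0 _).
  apply: le_trans hw.
  have hd : `|k0%:R - gval| <= 1.
    rewrite /gval -/rho distrC ger0_norm ?subr_ge0 //.
    by move: hi; rewrite -natr1; lra.
  have hd0 : 0 <= `|k0%:R - gval| by [].
  have := expR_ge1Dx (- (eps / 2) * `|k0%:R - gval|).
  rewrite /wt; nra.
have hsplit : Ssum good = Zsum - \sum_(k < Kc) wt k * (1 - \1_good (xk k)).
  by rewrite /Ssum /Zsum -sumrB; apply: eq_bigr => k _; ring.
have Kb : (n * n).+1%:R * (n%:R ^+ 8)^-1 <= Zsum / n%:R.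
  apply: le_trans (_ : (1 / 2) / n%:R <= _); last first.
    by rewrite ler_wpM2r // invr_ge0 ltW.
  rewrite -natr1 natrM ler_pdivrMr ?exprn_gt0 //.
  have -> : 1 / 2 / n%:R * n%:R ^+ 8 = n%:R ^+ 7 / 2 :> R.
    by field; rewrite gt_eqF.
  have h4 : 1 <= n%:R ^+ 4 :> R by rewrite exprn_ege1 //; lra.
  have h7 : n%:R ^+ 7 = n%:R ^+ 2 * (n%:R ^+ 4 * n%:R) :> R by ring.
  have ht : 3 <= n%:R ^+ 4 * n%:R :> R by nra.
  have h2 : 9 <= n%:R ^+ 2 :> R by rewrite expr2; nra.
  rewrite h7; nra.
rewrite ler_pdivlMr; last by apply: (lt_le_trans _ hZ); lra.
rewrite hsplit mulrBl mul1r.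
have hb := le_trans hbadsum Kb.
rewrite [_ * Zsum]mulrC; lra.
Qed.

End Mech.

Local Open Scope classical_set_scope.

Theorem mainTheorem14 (R : realType) :
  exists C : R, forall eps : R, 0 < eps <= 1 ->
    exists A : forall n : nat, sgraph n -> probability R R,
      (* eps-edge differential privacy *)
      (forall (n : nat) (G G' : sgraph n), edge_neighbors G G' ->
         forall O : set R, measurable O ->
           (A n G O <= (expR eps)%:E * A n G' O)%E) /\
      (* accuracy *)
      (forall (n : nat) (G : sgraph n), (3 <= n)%N ->
         (A n G [set x : R | (`|x - max_density R G| <= C * Num.sqrt (ln (n%:R) / eps))%R]
            >= (1 - (n%:R)^-1)%:E)%E).
Proof.
exists 4 => eps /andP[e0 e1].
exists (fun n G => @mech R eps n G); split.
- move=> n G G' hn O _.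
  rewrite !mechE -EFinM lee_fin /Ssum /Zsum /wt /Kc.
  apply: (@dp_real R (n * n) (fun k : nat => `|k%:R - @gval R n G|)
    (fun k : nat => `|k%:R - @gval R n G'|) (fun k : nat => \1_O (@xk R k)) eps e0).
    by move=> k; rewrite indicE ler0n.
  move=> k; apply: le_trans (ler_dist_dist _ _) _.
  have -> : (k%:R - @gval R n G) - (k%:R - @gval R n G') = - (@gval R n G - @gval R n G') by ring.
  by rewrite normrN; exact: (@md_sens R n G G' hn).
- move=> n G n3; rewrite mechE lee_fin.
  exact: (@mech_acc R eps n G e0 e1 n3).
Qed.
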